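(* Let $G$ be a topological rough group and $X$ a rough $G$-space with (left, resp. right) rough action $\mu$. Then for every $g\in G$, the left (resp. right) transformation map $L_g:\overline{X}\to\overline{X}$, $L_g(x)=gx$ (resp. $R_g:\overline{X}\to\overline{X}$, $R_g(x)=xg$) is a homeomorphism of $\overline{X}$.
   Context: An approximation space is a pair $(U,R)$ with $U$ a set and $R$ an equivalence relation on $U$; for $X\subseteq U$, $\overline{X}=\bigcup\{[x]_R : [x]_R\cap X\neq\emptyset\}$. Let $U$ carry a binary operation written $xy$. A subset $G\subseteq U$ is a rough group if: (1) $xy\in\overline{G}$ for all $x,y\in G$; (2) $(xy)z=x(yz)$ for all $x,y,z\in\overline{G}$; (3) there is $e\in\overline{G}$ with $xe=ex=x$ for all $x\in G$; (4) for every $x\in G$ there is $y\in G$ with $xy=yx=e$ (written $x^{-1}$). A topological rough group is a rough group $G$ with a topology $\tau$ on $\overline{G}$, $\tau_G$ the subspace topology on $G$, such that $G\times G\to\overline{G}$, $(x,y)\mapsto xy$, is continuous (product of $\tau_G$ to $\tau$) and $G\to G$, $x\mapsto x^{-1}$, is continuous for $\tau_G$. Let $X\subseteq U$ with $\overline{X}$ carrying a topology (and $X$ the subspace topology). A left rough action of $G$ on $X$ is a continuous map $\mu:\overline{G}\times\overline{X}\to\overline{X}$, written $\mu(g,x)=gx$, such that $g(g'x)=(gg')x$ for all $g,g'\in\overline{G}$, $x\in\overline{X}$, and $ex=x$ for all $x\in\overline{X}$, where $e$ is the rough identity. A right rough action is a continuous map $\overline{X}\times\overline{G}\to\overline{X}$,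 $(x,g)\mapsto xg$, with $(xg)g'=x(gg')$ and $xe=x$. $X$ with such an action is called a rough $G$-space. *)

(* Defs.v *)
From Stdlib Require Import Relations.

Set Implicit Arguments.

Section Rough.
Variable U : Type.


Definition is_equiv (R : U -> U -> Prop) : Prop :=
  (forall x, R x x) /\ (forall x y, R x y -> R y x) /\
  (forall x y z, R x y -> R y z -> R x z).

(* Upper approximation: union of the R-classes [x]_R meeting X, i.e.
   u is in it iff the class of u contains some element of X. *)
Definition upper (R : U -> U -> Prop) (X : U -> Prop) : U -> Prop :=
  fun u => exists x, X x /\ R u x.

Definition is_topology (S : U -> Prop) (tau : (U -> Prop) -> Prop) : Prop :=
  (forall O, tau O -> forall x, O x -> S x) /\
  tau (fun _ => False) /\ tau S /\
  (forall F : (U -> Prop) -> Prop, (forall O, F O -> tau O) ->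
     tau (fun x => exists O, F O /\ O x)) /\
  (forall O1 O2, tau O1 -> tau O2 -> tau (fun x => O1 x /\ O2 x)).

Definition subspace_top (A : U -> Prop) (tau : (U -> Prop) -> Prop)
  : (U -> Prop) -> Prop :=
  fun O => exists O', tau O' /\ (forall x, O x <-> (O' x /\ A x)).

Definition prod_open (S1 : U -> Prop) (t1 : (U -> Prop) -> Prop)
  (S2 : U -> Prop) (t2 : (U -> Prop) -> Prop) (W : U * U -> Prop) : Prop :=
  (forall p, W p -> S1 (fst p) /\ S2 (snd p)) /\
  (forall p, W p -> exists O1 O2, t1 O1 /\ t2 O2 /\ O1 (fst p) /\ O2 (snd p) /\
     (forall q, O1 (fst q) -> O2 (snd q) -> W q)).

Definition continuous_on (S1 : U -> Prop) (t1 : (U -> Prop) -> Prop)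
  (S2 : U -> Prop) (t2 : (U -> Prop) -> Prop) (f : U -> U) : Prop :=
  (forall x, S1 x -> S2 (f x)) /\
  (forall O, t2 O -> t1 (fun x => S1 x /\ O (f x))).

Definition continuous2_on (S1 : U -> Prop) (t1 : (U -> Prop) -> Prop)
  (S2 : U -> Prop) (t2 : (U -> Prop) -> Prop)
  (S3 : U -> Prop) (t3 : (U -> Prop) -> Prop) (f : U -> U -> U) : Prop :=
  (forall x y, S1 x -> S2 y -> S3 (f x y)) /\
  (forall O, t3 O ->
     prod_open S1 t1 S2 t2 (fun p => S1 (fst p) /\ S2 (snd p) /\ O (f (fst p) (snd p)))).

Definition homeomorphism_on (S : U -> Prop) (tau : (U -> Prop) -> Prop)
  (f : U -> U) : Prop :=
  continuous_on S tau S tau f /\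
  exists h : U -> U, continuous_on S tau S tau h /\
    (forall x, S x -> h (f x) = x) /\ (forall x, S x -> f (h x) = x).

Definition rough_group (R : U -> U -> Prop) (op : U -> U -> U)
  (G : U -> Prop) (e : U) : Prop :=
  (forall x y, G x -> G y -> upper R G (op x y)) /\
  (forall x y z, upper R G x -> upper R G y -> upper R G z ->
     op (op x y) z = op x (op y z)) /\
  upper R G e /\ (forall x, G x -> op x e = x /\ op e x = x) /\
  (forall x, G x -> exists y, G y /\ op x y = e /\ op y x = e).

Definition topological_rough_group (R : U -> U -> Prop) (op : U -> U -> U)
  (G : U -> Prop) (e : U) (tau : (U -> Prop) -> Prop) : Prop :=
  rough_group R op G e /\ is_topology (upper R G) tau /\
  continuous2_on G (subspace_top G tau) G (subspace_top G tau)
                 (upper R G) tau op /\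
  exists inv : U -> U,
    (forall x, G x -> G (inv x) /\ op x (inv x) = e /\ op (inv x) x = e) /\
    continuous_on G (subspace_top G tau) G (subspace_top G tau) inv.

Definition left_rough_action (R : U -> U -> Prop) (op : U -> U -> U)
  (G : U -> Prop) (e : U) (tau : (U -> Prop) -> Prop)
  (X : U -> Prop) (tauX : (U -> Prop) -> Prop) (mu : U -> U -> U) : Prop :=
  continuous2_on (upper R G) tau (upper R X) tauX (upper R X) tauX mu /\
  (forall g g' x, upper R G g -> upper R G g' -> upper R X x ->
     mu g (mu g' x) = mu (op g g') x) /\
  (forall x, upper R X x -> mu e x = x).

Definition right_rough_action (R : U -> U -> Prop) (op : U -> U -> U)
  (G : U -> Prop) (e : U) (tau : (U -> Prop) -> Prop)
  (X : U -> Prop) (tauX : (U -> Prop) -> Prop) (mu : U -> U -> U) : Prop :=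
  continuous2_on (upper R X) tauX (upper R G) tau (upper R X) tauX mu /\
  (forall g g' x, upper R G g -> upper R G g' -> upper R X x ->
     mu (mu x g) g' = mu x (op g g')) /\
  (forall x, upper R X x -> mu x e = x).

End Rough.

(* Main.v *)
Require Import Defs.
From Stdlib Require Import FunctionalExtensionality PropExtensionality.

Lemma set_ext (U : Type) (tau : (U -> Prop) -> Prop) (A B : U -> Prop) :
  (forall x, A x <-> B x) -> tau B -> tau A.
Proof.
  intros H HB. replace A with B; [exact HB|].
  apply functional_extensionality; intro x; apply propositional_extensionality.
  symmetry; apply H.
Qed.

Lemma slice_left (U : Type) (S1 : U -> Prop) t1 (SX : U -> Prop) tauX mu g :
  is_topology SX tauX -> continuous2_on S1 t1 SX tauX SX tauX mu -> S1 g ->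
  continuous_on SX tauX SX tauX (fun x => mu g x).
Proof.
  intros Ht [Hm Hc] Hg. split.
  - intros x Hx. apply Hm; auto.
  - intros O HO. destruct (Hc O HO) as [_ Hbox].
    destruct Ht as [_ [_ [_ [Hun _]]]].
    apply set_ext with (B := fun x => exists O2,
      (tauX O2 /\ forall y, O2 y -> SX y /\ O (mu g y)) /\ O2 x).
    + intro x; split.
      * intros [Hx Ox].
        destruct (Hbox (g, x)) as [O1 [O2 [_ [T2 [H1 [H2 Hq]]]]]]; simpl; auto.
        exists O2. split; auto. split; auto.
        intros y Hy. destruct (Hq (g, y)) as [_ [? ?]]; simpl in *; auto.
      * intros [O2 [[_ HO2] Hx]]. auto.
    + apply Hun. intros O2 [? _]; auto.
Qed.

Lemma slice_right (U : Type) (S1 : U -> Prop) t1 (SX : U -> Prop) tauX mu g :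
  is_topology SX tauX -> continuous2_on SX tauX S1 t1 SX tauX mu -> S1 g ->
  continuous_on SX tauX SX tauX (fun x => mu x g).
Proof.
  intros Ht [Hm Hc] Hg. split.
  - intros x Hx. apply Hm; auto.
  - intros O HO. destruct (Hc O HO) as [_ Hbox].
    destruct Ht as [_ [_ [_ [Hun _]]]].
    apply set_ext with (B := fun x => exists O2,
      (tauX O2 /\ forall y, O2 y -> SX y /\ O (mu y g)) /\ O2 x).
    + intro x; split.
      * intros [Hx Ox].
        destruct (Hbox (x, g)) as [O1 [O2 [T1 [_ [H1 [H2 Hq]]]]]]; simpl; auto.
        exists O1. split; auto. split; auto.
        intros y Hy. destruct (Hq (y, g)) as [? [_ ?]]; simpl in *; auto.
      * intros [O2 [[_ HO2] Hx]]. auto.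
    + apply Hun. intros O2 [? _]; auto.
Qed.

Theorem mainTheorem5 (U : Type) (R : U -> U -> Prop) (op : U -> U -> U)
  (G : U -> Prop) (e : U) (tau : (U -> Prop) -> Prop)
  (X : U -> Prop) (tauX : (U -> Prop) -> Prop) :
  is_equiv R ->
  topological_rough_group R op G e tau ->
  is_topology (upper R X) tauX ->
  (forall mu : U -> U -> U, left_rough_action R op G e tau X tauX mu ->
     forall g, G g -> homeomorphism_on (upper R X) tauX (fun x => mu g x)) /\
  (forall mu : U -> U -> U, right_rough_action R op G e tau X tauX mu ->
     forall g, G g -> homeomorphism_on (upper R X) tauX (fun x => mu x g)).
Proof.
  intros [Hrefl _] [_ [_ [_ [inv [Hinv _]]]]] Ht.
  assert (Hup : forall g, G g -> upper R G g) by (intros g Hg; exists g; auto).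
  split.
  - intros mu [Hc [Hass He]] g Hg.
    destruct (Hinv g Hg) as [Hi [E1 E2]].
    split; [apply slice_left with (S1 := upper R G) (t1 := tau); auto|].
    exists (fun x => mu (inv g) x).
    split; [apply slice_left with (S1 := upper R G) (t1 := tau); auto|].
    split; intros x Hx.
    + rewrite Hass, E2; auto.
    + rewrite Hass, E1; auto.
  - intros mu [Hc [Hass He]] g Hg.
    destruct (Hinv g Hg) as [Hi [E1 E2]].
    split; [apply slice_right with (S1 := upper R G) (t1 := tau); auto|].
    exists (fun x => mu x (inv g)).
    split; [apply slice_right with (S1 := upper R G) (t1 := tau); auto|].
    split; intros x Hx.
    + rewrite Hass, E1; auto.
    + rewrite Hass, E2; auto.
Qed.
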